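(* Let $\mathbf{P}=(X,P)$ be a dually-CPT poset and let $M$ be a strong clique module of $\mathbf{P}$ such that the subposet induced by $M$ is CI. If an element $z\in M$ is represented by a trivial path in a CPT representation $\{W_x\}_{x\in X}$ of $\mathbf{P}$, then there exists a CPT representation $\{W'_x\}_{x\in X}$ of $\mathbf{P}$ in which $z$ is represented by a non-trivial path.
   Context: A poset is CPT if there is a tree $T$ and paths $W_x$ of $T$ with $x<y$ iff $W_x\subsetneq W_y$ (a CPT representation); CI if this can be done with $T$ a path. $\mathbf{P}$ is dually-CPT if both $\mathbf{P}$ and its dual are CPT. A module is a set $M\subseteq X$ such that each $y\notin M$ is comparable to all or to none of the elements of $M$; it is strong if for every module $M'$, $M\cap M'=\emptyset$, $M\subseteq M'$ or $M'\subseteq M$. A strong module $M$ is a clique module if the complement of the comparability graph induced on $M$ is disconnected. A trivial path consists of a single vertex. *)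

(* Defs.v *)
From mathcomp Require Import all_boot.
Set Implicit Arguments. Unset Strict Implicit. Unset Printing Implicit Defensive.

Definition strict_order (X : finType) (lt : rel X) : Prop :=
  irreflexive lt /\ transitive lt.

Definition simple_graph (V : finType) (e : rel V) : Prop :=
  irreflexive e /\ symmetric e.

Definition is_tree (V : finType) (e : rel V) : Prop :=
  [/\ simple_graph e, 0 < #|V|,
      (forall u v : V, connect e u v) &
      ~ (exists c : seq V, [/\ 3 <= size c, uniq c & cycle e c])].

Definition is_graph_path (V : finType) (e : rel V) (W : {set V}) : Prop :=
  exists (v0 : V) (p : seq V), [/\ uniq (v0 :: p), path e v0 p & W = [set x in v0 :: p]].

Definition CPT_rep_on (X : finType) (lt : rel X) (A : {set X})
  (V : finType) (e : rel V) (W : X -> {set V}) : Prop :=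
  [/\ is_tree e,
      (forall x, x \in A -> is_graph_path e (W x)) &
      (forall x y, x \in A -> y \in A -> (lt x y <-> W x \proper W y))].

Definition CPT_rep (X : finType) (lt : rel X) (V : finType) (e : rel V) (W : X -> {set V}) :=
  CPT_rep_on lt [set: X] e W.

Definition is_CPT_on (X : finType) (lt : rel X) (A : {set X}) : Prop :=
  exists (V : finType) (e : rel V) (W : X -> {set V}), CPT_rep_on lt A e W.

Definition is_CI_on (X : finType) (lt : rel X) (A : {set X}) : Prop :=
  exists (V : finType) (e : rel V) (W : X -> {set V}),
    CPT_rep_on lt A e W /\ is_graph_path e [set: V].

Definition dual_rel (X : finType) (lt : rel X) : rel X := fun x y => lt y x.

Definition dually_CPT (X : finType) (lt : rel X) : Prop :=
  is_CPT_on lt [set: X] /\ is_CPT_on (dual_rel lt) [set: X].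

Definition comparable (X : finType) (lt : rel X) (x y : X) : bool := lt x y || lt y x.

Definition is_module (X : finType) (lt : rel X) (M : {set X}) : Prop :=
  forall y, y \notin M ->
    (forall m, m \in M -> comparable lt y m) \/ (forall m, m \in M -> ~~ comparable lt y m).

Definition strong_module (X : finType) (lt : rel X) (M : {set X}) : Prop :=
  is_module lt M /\
  forall M' : {set X}, is_module lt M' ->
    [\/ M :&: M' = set0, M \subset M' | M' \subset M].

Definition incomp_graph_on (X : finType) (lt : rel X) (M : {set X}) : rel X :=
  fun a b => [&& a \in M, b \in M, a != b & ~~ comparable lt a b].

Definition clique_module (X : finType) (lt : rel X) (M : {set X}) : Prop :=
  strong_module lt M /\
  exists a b, [/\ a \in M, b \in M & ~~ connect (incomp_graph_on lt M) a b].

(* Main.v *)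
Require Import Defs.
From mathcomp Require Import all_boot.
Set Implicit Arguments. Unset Strict Implicit. Unset Printing Implicit Defensive.


Section Tree.
Variables (V : finType) (e : rel V).
Hypothesis Ht : is_tree e.

Lemma tree_sym : symmetric e. Proof. by case: Ht => -[]. Qed.
Lemma tree_irr : irreflexive e. Proof. by case: Ht => -[]. Qed.

Lemma tree_noseg a t b : path e a (rcons t b) -> uniq (a :: rcons t b) -> e b a -> t = [::].
Proof.
move=> pt ut eba; case: t pt ut => // c t pt ut; exfalso.
case: Ht => _ _ _; apply; exists (a :: rcons (c :: t) b); split => //.
  by rewrite /= size_rcons.
by rewrite /cycle rcons_path pt last_rcons eba.
Qed.

Lemma tree_seg s1 a t b s2 : sorted e (s1 ++ a :: t ++ b :: s2) ->
  uniq (s1 ++ a :: t ++ b :: s2) -> e b a -> t = [::].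
Proof.
move=> so un eba; apply: (tree_noseg _ _ eba).
  move: so; rewrite sorted_cat_cons => /andP[_]; rewrite cat_path => /andP[p1 /= /andP[p2 _]].
  by rewrite rcons_path p1 p2.
move: un; rewrite cat_uniq => /and3P[_ _].
have -> : a :: t ++ b :: s2 = (a :: rcons t b) ++ s2 by rewrite /= cat_rcons.
by rewrite cat_uniq => /andP[].
Qed.

Lemma nbr_consec s1 w s2 u : sorted e (s1 ++ w :: s2) -> uniq (s1 ++ w :: s2) ->
  e w u -> u \in s1 ++ w :: s2 ->
  (exists s2', s2 = u :: s2') \/ (exists s1', s1 = rcons s1' u).
Proof.
move=> so un ewu; rewrite mem_cat inE.
have nwu : u != w by apply/eqP => E; move: ewu; rewrite E tree_irr.
rewrite (negPf nwu) /= => H; move: so un; case/orP: H => [/splitPr [t1 t2]| /splitPr [t1 t2]].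
- case: t2 => [|c t2] so un; first by right; exists t1; rewrite cats1.
  exfalso.
  move: so un; rewrite -catA cat_cons => so un.
  have := @tree_seg t1 u (c :: t2) w s2 so un ewu; done.
- case: t1 => [|c t1] so un; first by left; exists t2.
  exfalso.
  have := @tree_seg s1 w (c :: t1) u t2 so un; rewrite tree_sym => /(_ ewu); done.
Qed.

Lemma nbr3 s1 w s2 u1 u2 u3 : sorted e (s1 ++ w :: s2) -> uniq (s1 ++ w :: s2) ->
  e w u1 -> u1 \in s1 ++ w :: s2 ->
  e w u2 -> u2 \in s1 ++ w :: s2 ->
  e w u3 -> u3 \in s1 ++ w :: s2 ->
  [\/ u1 = u2, u1 = u3 | u2 = u3].
Proof.
move=> so un e1 i1 e2 i2 e3 i3.
case: (nbr_consec so un e1 i1) => -[x1 h1];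
case: (nbr_consec so un e2 i2) => -[x2 h2];
case: (nbr_consec so un e3 i3) => -[x3 h3].
all: try (by constructor 1; subst; congruence).
all: try (by constructor 2; subst; congruence).
all: try (by constructor 3; subst; congruence).
all: try (by constructor 1; move: h2; rewrite h1 => /rcons_inj; case).
all: try (by constructor 2; move: h3; rewrite h1 => /rcons_inj; case).
all: try (by constructor 3; move: h3; rewrite h2 => /rcons_inj; case).
Qed.
End Tree.

Lemma connect_symm (T : finType) (r : rel T) : symmetric r -> symmetric (connect r).
Proof.
move=> sr x y; rewrite -[RHS](connect_rev r) /=; apply: eq_connect => a b /=; exact: sr.
Qed.

Lemma connect_map (T T' : finType) (r : rel T) (r' : rel T') (f : T -> T') :
  (forall x y, r x y -> connect r' (f x) (f y)) ->
  forall x y, connect r x y -> connect r' (f x) (f y).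
Proof.
move=> H x _ /connectP[q pq ->]; elim: q x pq => //= y q IH x /andP[rxy /IH].
by apply: connect_trans; apply: H.
Qed.

Lemma noNone (T : eqType) (c : seq (option T)) : None \notin c -> c = map Some (pmap id c).
Proof.
elim: c => //= -[a|] c IH; rewrite inE => H; last by rewrite eqxx in H.
by rewrite /= -IH.
Qed.

Lemma sorted_last2 (T : Type) (r : rel T) s c w : sorted r (rcons (rcons s c) w) -> r c w.
Proof.
case: s => [/= /andP[]//|h s /=]; rewrite rcons_path last_rcons => /andP[_ ->] //.
Qed.

Lemma gpath_nonempty (V : finType) (e : rel V) S : is_graph_path e S -> exists x, x \in S.
Proof. by case=> v0 [q [_ _ ->]]; exists v0; rewrite inE mem_head. Qed.

Lemma gpath_nbr (V : finType) (e : rel V) S w x : symmetric e -> is_graph_path e S ->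
  w \in S -> x \in S -> x != w -> exists2 u, u \in S & e w u.
Proof.
move=> sym [v0 [q [un pq ->]]]; rewrite !in_set => wS xS nxw.
have so : sorted e (v0 :: q) by [].
move: so un xS; case/splitPr: wS => s1 s2.
case: s2 => [|c s2] so un xS.
  case/lastP: s1 so un xS => [|s1 c] so un xS.
    by move: xS; rewrite /= inE (negPf nxw).
  exists c; first by rewrite in_set mem_cat mem_rcons mem_head.
  rewrite sym; apply: (@sorted_last2 _ _ s1).
  by move: so; rewrite sorted_cat_cons => /andP[].
exists c; first by rewrite in_set mem_cat !inE eqxx !orbT.
by move: so; rewrite sorted_cat_cons => /andP[_ /= /andP[]].
Qed.


Section Subdiv.
Variables (V : finType) (e : rel V) (w p : V).
Hypothesis Ht : is_tree e.
Hypothesis ewp : e w p.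

Definition pairwp (a b : V) := ((a == w) && (b == p)) || ((a == p) && (b == w)).

Definition sd (x y : option V) : bool :=
  match x, y with
  | Some a, Some b => e a b && ~~ pairwp a b
  | None, Some b | Some b, None => (b == w) || (b == p)
  | None, None => false
  end.

Lemma sd_sym : symmetric sd.
Proof.
case=> [a|] [b|] //=; rewrite (tree_sym Ht) /pairwp; congr (_ && ~~ _).
by case: (a == w); case: (b == p); case: (a == p); case: (b == w).
Qed.

Lemma sd_irr : irreflexive sd.
Proof. by case=> [a|] //=; rewrite (tree_irr Ht). Qed.

Lemma sd_edge a b : e a b -> connect sd (Some a) (Some b).
Proof.
move=> eab; case H: (pairwp a b).
  apply: (@connect_trans _ _ None).
    by apply: connect1; move: H; rewrite /= /pairwp => /orP[/andP[->]|/andP[->]]; rewrite ?orbT.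
  by apply: connect1; move: H; rewrite /= /pairwp => /orP[/andP[_ ->]|/andP[_ ->]]; rewrite ?orbT.
by apply: connect1; rewrite /= eab H.
Qed.

Lemma sd_tree : is_tree sd.
Proof.
case: (Ht) => _ _ conn nocyc.
have toW : forall x, connect sd x (Some w).
  case=> [a|]; last by apply: connect1; rewrite /= eqxx.
  by apply: (connect_map (f := Some) sd_edge).
split.
- by split; [exact: sd_irr | exact: sd_sym].
- by rewrite card_option.
- move=> x y; apply: (connect_trans (toW x)); rewrite connect_symm //; exact: sd_sym.
- case=> c [sz un cy].
  case: (boolP (None \in c)) => [Nc|Nc]; last first.
    apply: nocyc; have E := noNone Nc; set c1 := pmap id c in E; exists c1.
    move: sz un cy; rewrite E size_map (map_inj_uniq (@Some_inj _)) cycle_map.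
    move=> sz un cy; split => //.
    have sub : subrel (relpre Some sd) e by move=> a b /andP[].
    exact: (sub_cycle sub cy).
  case/rot_to: Nc => i t E.
  move: sz un cy; rewrite -(size_rot i) -(rot_uniq i) -(rot_cycle i) E.
  move=> sz /= /andP[Nt un] /= cy.
  move: un cy sz; rewrite (noNone Nt); set t1 := pmap id t.
  case: t1 => [|a t1] //; case/lastP: t1 => [|t1 b] //.
  rewrite /= !size_map size_rcons => un.
  rewrite rcons_path path_map last_map last_rcons /= => /andP[ha /andP[pt hb]] _.
  have nab : a != b.
    apply/eqP=> Eab; move: un; rewrite Eab /= map_rcons mem_rcons mem_head //.
  have eba : e b a.
    move: ha hb nab; rewrite ?orbF.
    by case/orP=> /eqP -> /orP[] /eqP ->; rewrite ?eqxx // (tree_sym Ht).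
  have ut : uniq (a :: rcons t1 b).
    by move: un; rewrite /= (mem_map (@Some_inj _)) (map_inj_uniq (@Some_inj _)).
  have pt' : path e a (rcons t1 b).
    by apply: sub_path pt => x y /= /andP[].
  have t10 := tree_noseg Ht pt' ut eba.
  move: pt; rewrite t10 /= andbT => /andP[_]; rewrite /pairwp.
  move: ha hb nab; rewrite ?orbF.
  by case/orP=> /eqP -> /orP[] /eqP ->; rewrite ?eqxx ?orbT.
Qed.

Definition phi (S : {set V}) : {set option V} :=
  [set x | match x with Some a => a \in S | None => w \in S end].

Lemma gp_of_seq (T : finType) (r : rel T) (t : seq T) S :
  uniq t -> sorted r t -> t != [::] -> S = [set x in t] -> is_graph_path r S.
Proof. by case: t => // x t ut st _ ->; exists x, t. Qed.

Lemma sd_core s1 s2 : sorted e (s1 ++ w :: s2) -> uniq (s1 ++ w :: s2) ->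
  p \notin s1 -> (s2 = [::] \/ exists s2', s2 = p :: s2') ->
  is_graph_path sd (phi [set x in s1 ++ w :: s2]).
Proof.
move=> so un ps1 hs2.
have nwp : w != p by apply/eqP=> E; move: ewp; rewrite E (tree_irr Ht).
apply: (@gp_of_seq _ _ (map Some s1 ++ Some w :: None :: map Some s2)).
- have -> : map Some s1 ++ Some w :: None :: map Some s2 =
            (map Some s1 ++ [:: Some w]) ++ [:: None] ++ map Some s2 by rewrite -catA.
  rewrite uniq_catCA /= -catA /= -map_cons -map_cat (map_inj_uniq (@Some_inj _)) un andbT.
  by apply/mapP => -[].
- rewrite sorted_cat_cons -map_rcons sorted_map /=.
  move: so; rewrite sorted_cat_cons => /andP[so1 so2]; apply/andP; split.
    apply: (sub_in_sorted (P := predC1 p)) so1.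
      move=> a b; rewrite !inE /= /pairwp => /negPf -> /negPf ->; rewrite !andbF /= => ->//.
    by apply/allP => x; rewrite mem_rcons inE /= => /orP[/eqP->//|xs1]; apply/eqP => E; move: ps1; rewrite -E xs1.
  case: hs2 so2 un => [-> _ _|[s2' ->]]; first by rewrite /= eqxx. move=> /andP[_ pp] un; rewrite /= eqxx ?orbT path_map /=.
  rewrite eqxx orbT /=; apply: (sub_in_path (P := predC1 w)) pp.
    move=> a b; rewrite !inE /= /pairwp => /negPf -> /negPf ->; rewrite !andbF /= => ->//.
  apply/allP => x; rewrite /= inE => /orP[/eqP->|xs]; first by rewrite eq_sym.
  apply/eqP => E; move: un; rewrite cat_uniq /= => /and3P[_ _ /andP[]].
  by rewrite inE negb_or -E xs andbF.
- by case: s1 {so un ps1}.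
- apply/setP => -[a|]; rewrite !in_set ?mem_cat ?inE ?(mem_map (@Some_inj _)) ?eqxx ?orbT //.
Qed.

Lemma rev_split (T : Type) (s1 s2 : seq T) x : rev (s1 ++ x :: s2) = rev s2 ++ x :: rev s1.
Proof. by rewrite rev_cat rev_cons cat_rcons. Qed.

Lemma sd_core_rev s1 s2 : sorted e (s1 ++ w :: s2) -> uniq (s1 ++ w :: s2) ->
  p \notin s2 -> (s1 = [::] \/ exists s1', s1 = rcons s1' p) ->
  is_graph_path sd (phi [set x in s1 ++ w :: s2]).
Proof.
move=> so un ps2 hs1.
have -> : [set x in s1 ++ w :: s2] = [set x in rev s2 ++ w :: rev s1].
  by apply/setP => x; rewrite !in_set -rev_split mem_rev.
apply: sd_core.
- rewrite -rev_split rev_sorted; move: so; apply: sub_sorted => a b; by rewrite (tree_sym Ht).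
- by rewrite -rev_split rev_uniq.
- by rewrite mem_rev.
- case: hs1 => [->|[s1' ->]]; [by left | right; exists (rev s1'); by rewrite rev_rcons].
Qed.

Lemma sd_path S : is_graph_path e S ->
  (w \in S -> p \in S \/ (forall u u', u \in S -> u' \in S -> e w u -> e w u' -> u = u')) ->
  is_graph_path sd (phi S).
Proof.
case=> v0 [q [un pq ->]] cond.
have so : sorted e (v0 :: q) by [].
case: (boolP (w \in v0 :: q)) => ws; last first.
  apply: (@gp_of_seq _ _ (map Some (v0 :: q))).
  - by rewrite (map_inj_uniq (@Some_inj _)).
  - rewrite sorted_map; apply: (sub_in_sorted (P := predC1 w)) so.
      move=> a b; rewrite !inE /= /pairwp => /negPf -> /negPf ->; rewrite !andbF /= => ->//.
    by apply/allP => x xs; rewrite inE; apply: contraNneq ws => <-.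
  - by [].
  - apply/setP => -[a|]; rewrite !in_set ?(mem_map (@Some_inj _)) //.
    by rewrite (negPf ws); apply/esym/negbTE/mapP => -[].
have {}cond := cond ltac:(by rewrite in_set).
move: so un cond; case/splitPr: ws => s1 s2 so un cond.
case: (boolP (p \in s1 ++ w :: s2)) => ps.
  case: (nbr_consec Ht so un ewp ps) => [[s2' E2]|[s1' E1]].
    apply: sd_core => //; last by right; exists s2'.
    move: un; rewrite E2 cat_uniq => /and3P[_ /hasPn H _]; apply: H.
    by rewrite !inE eqxx orbT.
  apply: sd_core_rev => //; last by right; exists s1'.
  move: un; rewrite E1 cat_uniq => /and3P[_ /hasPn H _]; apply/negP => p2.
  by move: (H p); rewrite mem_rcons mem_head inE p2 orbT => /(_ isT).
case: cond => [|cond]; first by rewrite in_set (negPf ps).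
case: s2 so un cond ps => [|b s2] so un cond ps.
  apply: sd_core => //; last by left.
  by apply: contraNN ps; rewrite mem_cat => ->.
case/lastP: s1 so un cond ps => [|s1 a] so un cond ps.
  by apply: sd_core_rev => //; [apply: contraNN ps => H; rewrite /= inE H orbT | left].
exfalso.
have eab : e w a /\ e w b.
  move: so; rewrite sorted_cat_cons => /andP[so1 /andP[-> _]]; have := sorted_last2 so1.
  by rewrite (tree_sym Ht) => ->.
have nab : a != b.
  apply/eqP => Eab; move: un; rewrite cat_uniq => /and3P[_ /hasPn H _].
  by move: (H b); rewrite !inE eqxx orbT mem_rcons -Eab mem_head => /(_ isT).
move: nab; rewrite (cond a b) ?eqxx //; try tauto.
  by rewrite in_set mem_cat mem_rcons mem_head.
by rewrite in_set mem_cat !inE eqxx !orbT.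
Qed.

Lemma phi_sub A B : (phi A \subset phi B) = (A \subset B).
Proof.
apply/subsetP/subsetP => H.
  by move=> a aA; have := H (Some a); rewrite !in_set; apply.
by case=> [a|]; rewrite !in_set; apply: H.
Qed.

Lemma phi_proper A B : (phi A \proper phi B) = (A \proper B).
Proof. by rewrite !properE !phi_sub. Qed.

Lemma subdiv_main (X : finType) (lt : rel X) (W : X -> {set V}) (z : X) :
  CPT_rep lt e W -> W z = [set w] ->
  (forall x, w \in W x -> p \in W x \/
     (forall u u', u \in W x -> u' \in W x -> e w u -> e w u' -> u = u')) ->
  exists (V' : finType) (e' : rel V') (W' : X -> {set V'}),
    CPT_rep lt e' W' /\ 1 < #|W' z|.
Proof.
case=> _ gp ce Wz cond.
exists (option V), sd, (fun x => phi (W x)); split.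
  split; first exact: sd_tree.
    by move=> x _; apply: sd_path; [apply: gp; rewrite inE | exact: cond].
  by move=> x y xin yin; rewrite phi_proper; apply: ce.
apply/card_gt1P; exists (Some w), None; split => //; rewrite !inE Wz inE //.
Qed.
End Subdiv.


Lemma cross (T : eqType) (r : rel T) (P : pred T) x s : path r x s -> P x -> has (predC P) s ->
  exists x' y', [/\ r x' y', P x', ~~ P y', x' \in x :: s & y' \in s].
Proof.
elim: s x => //= y s IH x /andP[rxy ps] Px hs.
case: (boolP (P y)) => Py; last by exists x, y; rewrite !mem_head.
have [|x' [y' [? ? ? xin yin]]] := IH y ps Py; first by move: hs; rewrite /= Py.
by exists x', y'; split => //; rewrite inE ?xin ?yin orbT.
Qed.

Definition isl (A B : Type) (x : A + B) := if x is inl _ then true else false.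
Definition getl (A B : Type) (x : A + B) := if x is inl a then Some a else None.
Definition getr (A B : Type) (x : A + B) := if x is inr a then Some a else None.

Lemma all_isl (A B : Type) (c : seq (A + B)) : all (@isl A B) c -> c = map inl (pmap (@getl A B) c).
Proof. by elim: c => //= -[a|b] c IH //= /IH <-. Qed.
Lemma all_isr (A B : Type) (c : seq (A + B)) : all (predC (@isl A B)) c -> c = map inr (pmap (@getr A B) c).
Proof. by elim: c => //= -[a|b] c IH //= /IH <-. Qed.

Section Glue.
Variables (V1 V2 : finType) (e1 : rel V1) (e2 : rel V2) (a : V1) (b : V2).
Hypotheses (T1 : is_tree e1) (T2 : is_tree e2).

Definition gl (x y : V1 + V2) : bool :=
  match x, y with
  | inl x, inl y => e1 x y
  | inr x, inr y => e2 x y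
  | inl x, inr y | inr y, inl x => (x == a) && (y == b)
  end.

Lemma gl_sym : symmetric gl.
Proof. case=> x [y|y] /=; first [exact: (tree_sym T1) | exact: (tree_sym T2) | done]. Qed.

Lemma gl_cross x y : gl x y -> isl x -> ~~ isl y -> x = inl a /\ y = inr b.
Proof. by case: x y => x [y|y] //= /andP[/eqP-> /eqP->]. Qed.
Lemma gl_cross' x y : gl x y -> ~~ isl x -> isl y -> x = inr b /\ y = inl a.
Proof. by case: x y => x [y|y] //= /andP[/eqP-> /eqP->]. Qed.

Lemma gl_tree : is_tree gl.
Proof.
have toA : forall x, connect gl x (inl a).
  case=> [x|y].
    apply: (connect_map (f := inl)); last by case: T1 => _ _ C _; apply: C.
    by move=> u v uv; apply: connect1.
  apply: (@connect_trans _ _ (inr b)).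
    apply: (connect_map (f := inr)); last by case: T2 => _ _ C _; apply: C.
    by move=> u v uv; apply: connect1.
  by apply: connect1; rewrite /= !eqxx.
split.
- split; last exact: gl_sym.
  by case=> x /=; rewrite ?(tree_irr T1) ?(tree_irr T2).
- by rewrite card_sum; case: T1 => _ H _ _; apply: leq_trans H (leq_addr _ _).
- by move=> x y; apply: (connect_trans (toA x)); rewrite connect_symm //; exact: gl_sym.
case=> c [sz un cy].
case: (boolP (all (@isl _ _) c)) => [al|].
  case: T1 => _ _ _; apply; exists (pmap (@getl _ _) c); move: sz un cy.
  rewrite {1 2 3}(all_isl al) size_map (map_inj_uniq (@inl_inj _ _)) cycle_map => sz un cy.
  by split.
rewrite -has_predC => hl.
case: (boolP (all (predC (@isl _ _)) c)) => [al|].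
  case: T2 => _ _ _; apply; exists (pmap (@getr _ _) c); move: sz un cy.
  rewrite {1 2 3}(all_isr al) size_map (map_inj_uniq (@inr_inj _ _)) cycle_map => sz un cy.
  by split.
rewrite -has_predC => hr.
have [ab [ac bc]] : gl (inl a) (inr b) /\ inl a \in c /\ inr b \in c.
  case/hasP: hr => x xc /= /negPn lx.
  case/rot_to: xc => i t E.
  have cy' : path gl x (rcons t x) by move: cy; rewrite -(rot_cycle i) E.
  have [|x' [y' [g1 p1 p2 i1 i2]]] := cross cy' lx.
    case/hasP: hl => y yc /= ly; apply/hasP; exists y => //.
    have : y \in rot i c by rewrite mem_rot.
    rewrite E inE => /orP[/eqP E'|]; first by rewrite E' lx in ly.
    by rewrite mem_rcons inE => ->; rewrite orbT.
  have [E1 E2] := gl_cross g1 p1 p2; subst x' y'.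
  split; first by rewrite /= !eqxx.
  split; rewrite -(mem_rot i) E.
    by move: i1; rewrite !inE mem_rcons inE; case/orP => [->|/orP[->|->]]; rewrite ?orbT.
  by move: i2; rewrite mem_rcons !inE; case/orP => [->|->]; rewrite ?orbT.
case/rot_to: ac => j t E.
move: sz un cy; rewrite -(size_rot j) -(rot_uniq j) -(rot_cycle j) E => sz un cy.
have bt : inr b \in t.
  have : inr b \in rot j c by rewrite mem_rot.
  by rewrite E inE.
move: sz un cy; case/splitPr: bt => t1 t2 sz un cy.
move: cy; rewrite /= rcons_cat /= cat_path => /andP[pt1 pt2].
move: un; rewrite /= mem_cat !inE negb_or cat_uniq /= => /and5P[/andP[nat1 nat2] ut1 H nbt2 ut2].
move: H; rewrite negb_or => /andP[nbt1' _].
have t1E : t1 = [::].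
  case: t1 nat1 nbt1' pt1 pt2 {ut1 sz} => [//|h t1] nat1 nbt1' /= /andP[gh pt1] pt2.
  exfalso.
  have lh : isl h.
    move: gh nbt1'; clear pt1 pt2 nat1; case: h => //= y /andP[_ /eqP ->]; by rewrite inE eqxx.
  have pp : path gl h (rcons t1 (inr b)) by rewrite rcons_path pt1; case/andP: pt2.
  have [|x' [y' [g1 p1 p2 i1 i2]]] := cross pp lh.
    by apply/hasP; exists (inr b); rewrite ?mem_rcons ?mem_head.
  have [E1 _] := gl_cross g1 p1 p2; subst x'.
  by move: i1 nat1; rewrite -rcons_cons mem_rcons !inE /= => ->.
have t2E : t2 = [::].
  move: pt2; rewrite t1E /= => /andP[_].
  case: t2 nat2 nbt2 {ut2 sz} => [//|h t2] nat2 nbt2 /= /andP[gh pt2].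
  exfalso.
  have lh : ~~ isl h.
    move: gh nat2; clear pt2 nbt2; case: h => //= y /andP[/eqP -> _]; by rewrite inE eqxx.
  have [|x' [y' [g1 p1 p2 i1 i2]]] := cross (P := predC (@isl _ _)) pt2 lh.
    by apply/hasP; exists (inl a); rewrite ?mem_rcons ?mem_head.
  have [E1 _] := gl_cross' g1 p1 (negbNE p2); subst x'.
  by move: i1 nbt2; rewrite -rcons_cons mem_rcons !inE /= => ->.
by move: sz; rewrite t1E t2E.
Qed.
End Glue.


Lemma nbr3_set (V : finType) (e : rel V) S w u1 u2 u3 : is_tree e -> is_graph_path e S ->
  w \in S -> u1 \in S -> u2 \in S -> u3 \in S -> e w u1 -> e w u2 -> e w u3 ->
  [\/ u1 = u2, u1 = u3 | u2 = u3].
Proof.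
move=> T [v0 [q [un pq ->]]]; rewrite !in_set => ws.
have so : sorted e (v0 :: q) by [].
move: so un; case/splitPr: ws => s1 s2 so un i1 i2 i3 e1 e2 e3.
exact: (nbr3 T so un e1 i1 e2 i2 e3 i3).
Qed.

Lemma gp_map (V V' : finType) (r : rel V) (r' : rel V') (f : V -> V') S :
  injective f -> (forall x y, r' (f x) (f y) = r x y) -> is_graph_path r S -> is_graph_path r' (f @: S).
Proof.
move=> fi fr [v0 [q [un pq ->]]]; exists (f v0), (map f q); split.
- by rewrite -map_cons (map_inj_uniq fi).
- by rewrite path_map (@eq_path _ _ r).
- apply/setP => x; rewrite in_set -map_cons; apply/imsetP/mapP => -[y]; rewrite ?in_set => yi ->;
  by exists y; rewrite ?in_set.
Qed.

Lemma imset_proper_inj (T T' : finType) (f : T -> T') (A B : {set T}) :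
  injective f -> (f @: A \proper f @: B) = (A \proper B).
Proof.
move=> fi.
have H : forall C D : {set T}, (f @: C \subset f @: D) = (C \subset D).
  move=> C D; apply/idP/idP => [/subsetP sub|/imsetS //]; apply/subsetP => x xC.
  by have := sub (f x); rewrite !(mem_imset _ _ fi); apply.
by rewrite !properE !H.
Qed.

Unset Implicit Arguments.

Theorem mainTheorem5 (X : finType) (lt : rel X) (M : {set X}) (z : X)
  (V : finType) (e : rel V) (W : X -> {set V}) :
  strict_order lt ->
  dually_CPT lt ->
  clique_module lt M ->
  is_CI_on lt M ->
  CPT_rep lt e W ->
  z \in M ->
  #|W z| = 1 ->
  exists (V' : finType) (e' : rel V') (W' : X -> {set V'}),
    CPT_rep lt e' W' /\ 1 < #|W' z|.
Proof.
move=> [ltirr lttr] _ [[modM strong] [a0 [b0 [a0M b0M nconn]]]]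
  [V1 [e1 [W1 [[T1 gp1 ce1] hp1]]]] rep zM Wz1.
have [T gp ce] := rep.
have [w Wz] : exists w, W z = [set w] by apply/cards1P/eqP.
have Wne : forall x, exists v, v \in W x.
  by move=> x; apply: (gpath_nonempty (gp x _)); rewrite inE.
have zmin : forall x, ~~ lt x z.
  move=> x; apply/negP => /(ce x z (in_setT _) (in_setT _)) /proper_card.
  rewrite Wz cards1 ltnS leqn0 cards_eq0 => /eqP W0.
  by have [v] := Wne x; rewrite W0 inE.
have compC : forall x y : X, Defs.comparable lt x y = Defs.comparable lt y x.
  by move=> x y; rewrite /Defs.comparable orbC.
have modz : forall y, y \notin M -> Defs.comparable lt y z -> forall m, m \in M -> Defs.comparable lt y m.
  move=> y yM cyz m mM; case: (modM y yM) => H; first exact: H.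
  by have := H z zM; rewrite cyz.
set g := incomp_graph_on lt M.
have gsym : symmetric g.
  by move=> x y; rewrite /g /incomp_graph_on andbCA eq_sym compC.
have [c [cM ncc]] : exists c, c \in M /\ ~~ connect g z c.
  case: (boolP (connect g z a0)) => ha; last by exists a0.
  case: (boolP (connect g z b0)) => hb; last by exists b0.
  exfalso; move/negP: nconn; apply; apply: connect_trans hb.
  by rewrite connect_symm.
have nzc : z != c by apply/eqP => E; move: ncc; rewrite -E connect0.
have ltzc : lt z c.
  have : Defs.comparable lt z c.
    apply: contraNT ncc => nc; apply: connect1.
    rewrite /g /incomp_graph_on zM cM nc andbT /=.
    done.
  by rewrite /Defs.comparable (negPf (zmin c)) orbF.
have ceT : forall x y, lt x y <-> W x \proper W y.
  by move=> x y; apply: ce; rewrite inE.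
case: (boolP [exists y0, [forall m, (m \in M) ==> lt m y0]]) => [/existsP [y0 /forallP hy0]| nex].
  have wm0 : W z \proper W c by apply/ceT.
  have [Wzc [x0 x0c x0nz]] := properP wm0.
  have wc : w \in W c by apply: (subsetP Wzc); rewrite Wz inE.
  have x0w : x0 != w by apply: contraNneq x0nz => ->; rewrite Wz inE.
  have [p pc ewp] := gpath_nbr (tree_sym T) (gp c (in_setT _)) wc x0c x0w.
  apply: (subdiv_main T ewp rep Wz).
  move=> x wx; case: (boolP (p \in W x)) => px; [by left | right].
  move=> u u' ui u'i ewu ewu'.
  case: (boolP (W z \proper W x)) => pr; last first.
    have : W x \subset W z.
      move: pr; rewrite properE negb_and negbK => /orP[|//].
      by rewrite Wz sub1set wx.
    by move/subsetP/(_ u ui); rewrite Wz inE => /eqP E; move: ewu; rewrite E (tree_irr T).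
  have lzx : lt z x by apply/ceT.
  have sub : W x \subset W y0.
    case: (boolP (x \in M)) => xM.
      by have := hy0 x; rewrite xM /= => /ceT /proper_sub.
    have := modz x xM; rewrite /Defs.comparable lzx orbT => /(_ isT c cM) /orP[lxc|lcx].
      by apply: proper_sub; apply/ceT; apply: lttr lxc _; have := hy0 c; rewrite cM.
    have := proper_sub ((ceT c x).1 lcx) => /subsetP/(_ p pc).
    by rewrite (negPf px).
  have wy : w \in W y0 by apply: (subsetP sub).
  have py : p \in W y0.
    by apply: (subsetP (proper_sub ((ceT c y0).1 _))) => //; have := hy0 c; rewrite cM.
  case: (nbr3_set T (gp y0 (in_setT _)) wy (subsetP sub _ ui) (subsetP sub _ u'i) py ewu ewu' ewp)
    => // E; [move: ui | move: u'i]; by rewrite E (negPf px).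
have nex' : forall y0, exists2 m, m \in M & ~~ lt m y0.
  move=> y0; move: nex; rewrite negb_exists => /forallP /(_ y0).
  by rewrite negb_forall => /existsP [m]; rewrite negb_imply => /andP[mM nl]; exists m.
have noncross : forall x m, x \notin M -> m \in M -> ~~ Defs.comparable lt x m.
  pose A := [set m | (m \in M) && connect g z m].
  pose Y := [set y | (y \notin M) && Defs.comparable lt y z].
  have modAY : is_module lt (A :|: Y).
    move=> x; rewrite !inE negb_or => /andP[xA xY].
    case: (boolP (x \in M)) => xM.
      left => m; rewrite !inE => /orP[/andP[mM czm]| /andP[mM' cmz]].
        case: (eqVneq m x) => [Emx|nmx]; first by move: xA; rewrite -Emx mM czm.
        apply: contraNT xA => nc; rewrite xM /=; apply: (connect_trans czm); apply: connect1.
        by rewrite /g /incomp_graph_on mM xM nmx /= compC nc.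
      by rewrite compC; apply: modz.
    right.
    have cxz : ~~ Defs.comparable lt x z by move: xY; rewrite xM.
    have incM : forall m, m \in M -> ~~ Defs.comparable lt x m.
      by case: (modM x xM) => Hx //; have := Hx z zM; rewrite (negPf cxz).
    move=> m; rewrite !inE => /orP[/andP[mM _]| /andP[mM' cmz]]; first exact: incM.
    have lzm : lt z m by move: cmz; rewrite /Defs.comparable (negPf (zmin m)).
    apply/negP; rewrite /Defs.comparable => /orP[lxm|lmx].
      have [m' m'M nl] := nex' m.
      have := modz m mM' cmz m' m'M; rewrite /Defs.comparable (negPf nl) orbF => lmm'.
      by have := incM m' m'M; rewrite /Defs.comparable (lttr _ _ _ lxm lmm').
    by move: cxz; rewrite /Defs.comparable (lttr _ _ _ lzm lmx) orbT.
  case: (strong _ modAY) => [H|H|H].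
  - by move/setP: H => /(_ z); rewrite !inE zM connect0.
  - by move/subsetP: H => /(_ c cM); rewrite !inE cM (negPf ncc).
  move=> x m xM mM; apply/negP => cxm.
  have cxz : Defs.comparable lt x z.
    by case: (modM x xM) => Hx; [exact: Hx | move: (Hx m mM); rewrite cxm].
  have : x \in A :|: Y by rewrite !inE xM cxz orbT.
  by move/(subsetP H); rewrite (negPf xM).
have [w1 w1i] := gpath_nonempty (gp1 z zM).
pose G := gl e1 e w1 w.
pose W2 := fun x => if x \in M then inl @: W1 x else inr @: W x.
have repG : CPT_rep lt G W2.
  split; first exact: gl_tree.
    move=> x _; rewrite /W2; case: ifP => xM.
      by apply: gp_map; [exact: inl_inj | by [] | exact: gp1].
    by apply: gp_map; [exact: inr_inj | by [] | exact: gp; rewrite inE].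
  move=> x y _ _; rewrite /W2; case: ifP => xM; case: ifP => yM.
  - rewrite imset_proper_inj; [exact: ce1 | exact: inl_inj].
  - split => [lxy|pr].
      by have := noncross y x (negbT yM) xM; rewrite /Defs.comparable lxy orbT.
    have [v vi] := gpath_nonempty (gp1 x xM).
    move/proper_sub/subsetP: pr => /(_ (inl v)); rewrite mem_imset //; last exact: inl_inj.
    by move=> /(_ vi) /imsetP [].
  - split => [lxy|pr].
      by have := noncross x y (negbT xM) yM; rewrite /Defs.comparable lxy.
    have [v vi] := Wne x.
    move/proper_sub/subsetP: pr => /(_ (inr v)); rewrite mem_imset //; last exact: inr_inj.
    by move=> /(_ vi) /imsetP [].
  - rewrite imset_proper_inj; [exact: ceT | exact: inr_inj].
case: (ltnP 1 #|W1 z|) => hc.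
  exists (V1 + V)%type, G, W2; split => //.
  by rewrite /W2 zM card_imset //; exact: inl_inj.
have W1z : W1 z = [set w1].
  by apply/eqP; rewrite eq_sym eqEcard sub1set w1i cards1.
have wm0 : W1 z \proper W1 c by apply/ce1.
have [Wzc [x0 x0c x0nz]] := properP wm0.
have wc : w1 \in W1 c by apply: (subsetP Wzc).
have x0w : x0 != w1 by apply: contraNneq x0nz => ->.
have [n1 n1c ewn] := gpath_nbr (tree_sym T1) (gp1 c cM) wc x0c x0w.
have ewn' : G (inl w1) (inl n1) by [].
apply: (subdiv_main (gl_tree w1 w T1 T) ewn' repG).
  by rewrite /W2 zM W1z imset_set1.
move=> x; rewrite /W2; case: ifP => xM; last by case/imsetP.
move=> _; case: (boolP (inl n1 \in inl @: W1 x)) => pn; [by left | right].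
move=> u u' /imsetP [u1 u1i ->] /imsetP [u2 u2i ->] /= eu1 eu2.
case: (nbr3_set T1 hp1 (in_setT w1) (in_setT u1) (in_setT u2) (in_setT n1) eu1 eu2 ewn) => [->//|E|E].
  by move: pn; rewrite -E mem_imset ?u1i //; exact: inl_inj.
by move: pn; rewrite -E mem_imset ?u2i //; exact: inl_inj.
Qed.
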